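(* Let $\rho$ be an $n$-qubit density matrix and define $\vec z\in\mathbb{C}^n$ by $z_i=\langle e_i|\rho|0^n\rangle$. If $\vec a\in\mathbb{C}^n$ satisfies $\|\vec a-\vec z\|_2\le\|\vec a\|_2/2$, then \[ \langle\pi_{\vec a/10}|\rho|\pi_{\vec a/10}\rangle\ge\langle0^n|\rho|0^n\rangle+\frac{\|\vec a\|_2^2}{20}. \]
   Context: For $\vec w\in\mathbb{C}^n$, $|\pi_{\vec w}\rangle=\bigotimes_{i=1}^n\frac{|0\rangle+w_i|1\rangle}{\sqrt{1+|w_i|^2}}$. $|e_i\rangle$ denotes the $n$-qubit computational basis state with $|1\rangle$ in position $i$ and $|0\rangle$ elsewhere. *)

(* Defs.v *)
(* Complex scalars: an arbitrary numClosedFieldType C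
   (e.g. complex numbers); 'M[C]_(2^n) are n-qubit operators. *)
From mathcomp Require Import all_boot all_order all_algebra.
Set Implicit Arguments. Unset Strict Implicit. Unset Printing Implicit Defensive.
Import Order.TTheory GRing.Theory Num.Theory Num.Def.
Local Open Scope ring_scope.

Section Qubits.
Variable C : numClosedFieldType.
Variable n : nat.

(* Computational basis state |x_1...x_n>  <->  index k : 'I_(2^n) with
   x_{i} = bit i of k (binary expansion). *)
Definition qbit (k : 'I_(2^n)) (i : 'I_n) : bool := odd (k %/ 2 ^ i).

Lemma idx0_proof : (0 < 2 ^ n)%N.
Proof. by rewrite expn_gt0. Qed.

Definition idx0 : 'I_(2^n) := Ordinal idx0_proof.

Lemma e_idx_proof (i : 'I_n) : (2 ^ i < 2 ^ n)%N.
Proof. by rewrite ltn_exp2l. Qed.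

(* index of |e_i> : the basis state with 1 in position i and 0 elsewhere *)
Definition e_idx (i : 'I_n) : 'I_(2^n) := Ordinal (e_idx_proof i).

Definition expval (A : 'M[C]_(2^n)) (psi : 'cV[C]_(2^n)) : C :=
  \sum_(k < 2^n) \sum_(l < 2^n) (psi k 0)^* * A k l * psi l 0.

Definition density_matrix (rho : 'M[C]_(2^n)) : Prop :=
  [/\ forall k l, rho l k = (rho k l)^*,
      forall psi : 'cV[C]_(2^n), 0 <= expval rho psi
    & \tr rho = 1].

Definition pi_state (w : 'I_n -> C) : 'cV[C]_(2^n) :=
  \col_(k < 2^n) \prod_(i < n)
     ((if qbit k i then w i else 1) / sqrtC (1 + `|w i| ^+ 2)).

Definition norm2 (v : 'I_n -> C) : C := sqrtC (\sum_(i < n) `|v i| ^+ 2).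

End Qubits.

(* Main.v *)
Require Import Defs.
From mathcomp Require Import all_boot all_order all_algebra ring.
Import Order.TTheory GRing.Theory Num.Theory.
Set Implicit Arguments. Unset Strict Implicit. Unset Printing Implicit Defensive.

Lemma bits_inj n m m' : (m < 2 ^ n)%N -> (m' < 2 ^ n)%N ->
  (forall i, (i < n)%N -> odd (m %/ 2 ^ i) = odd (m' %/ 2 ^ i)) -> m = m'.
Proof.
elim: n m m' => [|n IH] m m'.
  by rewrite expn0 !ltnS !leqn0 => /eqP -> /eqP ->.
move=> hm hm' H.
have h0 := H 0%N isT; rewrite expn0 !divn1 in h0.
have h2 : m %/ 2 = m' %/ 2.
  apply: IH.
  - by rewrite ltn_divLR // mulnC -expnS.
  - by rewrite ltn_divLR // mulnC -expnS.
  move=> i lti; rewrite -!divnMA -expnS; exact: H.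
by rewrite -(odd_double_half m) -(odd_double_half m') -!divn2 h0 h2.
Qed.

Local Open Scope ring_scope.

Lemma qbit_inj n : injective (fun k : 'I_(2 ^ n) => [ffun i : 'I_n => qbit k i]).
Proof.
move=> k k' /ffunP E; apply: val_inj; apply: (@bits_inj n); rewrite ?ltn_ord // => i lti.
by have := E (Ordinal lti); rewrite !ffunE.
Qed.

Lemma sum_prod_bits (C : comNzRingType) n (G : 'I_n -> bool -> C) :
  \sum_(k < 2 ^ n) \prod_i G i (qbit k i) = \prod_i (G i true + G i false).
Proof.
have bij : bijective (fun k : 'I_(2 ^ n) => [ffun i : 'I_n => qbit k i]).
  by apply: inj_card_bij; [exact: qbit_inj | rewrite card_ffun !card_ord card_bool].
under eq_bigr do rewrite -big_bool.
rewrite bigA_distr_bigA (reindex _ (onW_bij _ bij)) /=.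
by apply: eq_bigr => k _; apply: eq_bigr => i _; rewrite ffunE.
Qed.
Lemma qbit_idx0 n (i : 'I_n) : qbit (idx0 n) i = false.
Proof. by rewrite /qbit /= div0n. Qed.

Lemma qbit_e n (i j : 'I_n) : qbit (e_idx j) i = (i == j).
Proof.
rewrite /qbit /=.
case: (leqP i j) => hij.
  rewrite -expnB // oddX orbF subn_eq0.
  by rewrite -val_eqE /= eqn_leq hij.
rewrite divn_small ?ltn_exp2l //.
by apply/esym/negbTE; rewrite -val_eqE /= neq_ltn hij orbT.
Qed.

Lemma e_idx_inj n : injective (@e_idx n).
Proof. by move=> i j /(congr1 val) /= /expnI H; apply: val_inj; apply: H. Qed.

Lemma e_idx_neq0 n (i : 'I_n) : e_idx i != idx0 n.
Proof. by rewrite -val_eqE /= -lt0n expn_gt0. Qed.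

Lemma prod_bound (F : numFieldType) (I : Type) (r : seq I) (x : I -> F) :
  (forall i, 0 <= x i) ->
  (\prod_(i <- r) (1 + x i)) * (1 - \sum_(i <- r) x i) <= 1.
Proof.
move=> x0; elim: r => [|i r IH]; first by rewrite !big_nil subr0 mulr1.
rewrite !big_cons.
have P0 : 0 <= \prod_(j <- r) (1 + x j) by apply: prodr_ge0 => j _; rewrite addr_ge0.
have S0 : 0 <= \sum_(j <- r) x j by apply: sumr_ge0.
apply: le_trans IH.
have -> : (1 + x i) * \prod_(j <- r) (1 + x j) * (1 - (x i + \sum_(j <- r) x j))
  = \prod_(j <- r) (1 + x j) * (1 - \sum_(j <- r) x j)
    - \prod_(j <- r) (1 + x j) * (x i ^+ 2 + x i * \sum_(j <- r) x j) by ring.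
by rewrite lerBlDr lerDl mulr_ge0 // addr_ge0 ?exprn_ge0 ?mulr_ge0.
Qed.
Lemma final_arith (F : numFieldType) (p q R m X P : F) :
  0 <= p -> p <= 1 -> p + 10 * X <= q -> 0 <= m -> m <= P - 1 - X ->
  P * (1 - X) <= 1 -> 0 <= X -> X <= 1 / 25 -> R \is Num.real ->
  (forall t : F, t \is Num.real -> 0 <= t ^+ 2 * q + t * R + m) ->
  P * (p + 5 * X) <= q + R + m.
Proof.
move=> p0 p1 hq m0 hm hP X0 X1 Rr ht.
have q0 : 0 <= q by rewrite (le_trans _ hq) // addr_ge0 // mulr_ge0.
have X1' : X <= 1 / 10 by rewrite (le_trans X1) // ler_pM2l // lef_pV2 ?posrE // ler_nat.
have hX1 : 0 <= 1 - X by rewrite subr_ge0 (le_trans X1') // ler_pdivrMr // mul1r ler1n.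
have [Xz|Xnz] := eqVneq X 0.
  move: hP hm hq; rewrite Xz !subr0 mulr1 mulr0 addr0 => hP hm hq.
  have mz : m = 0 by apply/eqP; rewrite eq_le m0 andbT (le_trans hm) // subr_le0.
  rewrite mz addr0.
  have q1 : q + 1 != 0 by rewrite gt_eqF // ltr_wpDl.
  have Rz : R = 0.
    have rr : (- R / (q + 1)) \is Num.real.
      by apply: rpredM; [rewrite rpredN | rewrite rpredV ger0_real // addr_ge0].
    have := ht _ rr.
    rewrite mz addr0.
    have -> : (- R / (q + 1)) ^+ 2 * q + - R / (q + 1) * R = - (R ^+ 2 / (q + 1) ^+ 2) by field.
    rewrite oppr_ge0 => h.
    have h2 : R ^+ 2 / (q + 1) ^+ 2 = 0.
      apply/eqP; rewrite eq_le h /= divr_ge0 //; last by rewrite exprn_ge0 // addr_ge0.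
      by rewrite -real_normK // exprn_ge0.
    by move: h2 => /eqP; rewrite mulf_eq0 invr_eq0 !expf_eq0 /= (negbTE q1) orbF => /eqP.
  by rewrite Rz addr0 (le_trans _ hq) // mulr0 addr0 ler_piMl.
have Xp : 0 < X by rewrite lt_def Xnz X0.
have A1 : 0 <= X ^+ 2 * q + X * R + m by apply: ht; rewrite ger0_real.
have A2 : 0 <= q - p - 10 * X by rewrite -addrA -opprD subr_ge0.
have A3 : 0 <= 1 - P * (1 - X) by rewrite subr_ge0.
have A4 : 0 <= X ^+ 2 - m * (1 - X).
  rewrite subr_ge0 (le_trans (ler_wpM2r hX1 hm)) //.
  have -> : (P - 1 - X) * (1 - X) = P * (1 - X) - (1 - X ^+ 2) by ring.
  by rewrite lerBlDr (_ : X ^+ 2 + (1 - X ^+ 2) = 1) //; ring.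
have Xq : 0 < X * (1 - X).
  by rewrite mulr_gt0 // subr_gt0 (le_lt_trans X1') // ltr_pdivrMr // mul1r ltr1n.
rewrite -subr_ge0 -(pmulr_rge0 _ Xq).
have -> : X * (1 - X) * (q + R + m - P * (p + 5 * X)) =
   (1 - X) * (X ^+ 2 * q + X * R + m) + X * (1 - X) ^+ 2 * (q - p - 10 * X)
   + (1 - X) * (X ^+ 2 - m * (1 - X)) + X * (p + 5 * X) * (1 - P * (1 - X))
   + X ^+ 2 * (2 * (1 - p) + (2 - 19 * X) + X * p + 10 * X ^+ 2) by ring.
have h19 : 0 <= 2 - 19 * X.
  rewrite subr_ge0 (le_trans (ler_wpM2l _ X1')) //. by rewrite mul1r ler_pdivrMr // -natrM ler_nat.
have hp1 : 0 <= 1 - p by rewrite subr_ge0.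
apply: addr_ge0; [apply: addr_ge0; [apply: addr_ge0; [apply: addr_ge0|]|]|].
- exact: mulr_ge0.
- by rewrite mulr_ge0 // mulr_ge0 // exprn_ge0.
- exact: mulr_ge0.
- by rewrite mulr_ge0 // mulr_ge0 // addr_ge0 // mulr_ge0.
- rewrite mulr_ge0 ?exprn_ge0 // addr_ge0 ?mulr_ge0 ?exprn_ge0 //.
  by apply: addr_ge0; [apply: addr_ge0; [apply: mulr_ge0 | exact: h19] | apply: mulr_ge0].
Qed.
Section Form.
Variable (C : numClosedFieldType) (n : nat) (rho : 'M[C]_(2^n)).
Hypothesis Hherm : forall k l, rho l k = (rho k l)^*.
Hypothesis Hpsd : forall psi : 'cV[C]_(2^n), 0 <= expval rho psi.
Hypothesis Htr : \tr rho = 1.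

Definition B (x y : 'I_(2^n) -> C) : C :=
  \sum_k \sum_l (x k)^* * rho k l * y l.

Lemma B_ge0 x : 0 <= B x x.
Proof.
have := Hpsd (\col_k x k); rewrite /expval /B.
by under eq_bigr do under eq_bigr do rewrite !mxE.
Qed.

Lemma B_herm x y : B y x = (B x y)^*.
Proof.
rewrite /B exchange_big rmorph_sum /=; apply: eq_bigr => k _.
rewrite rmorph_sum; apply: eq_bigr => l _.
rewrite !rmorphM /= conjCK -Hherm; ring.
Qed.

Lemma B_addl x y w : B (fun k => x k + y k) w = B x w + B y w.
Proof.
rewrite /B -big_split; apply: eq_bigr => k _; rewrite -big_split.
by apply: eq_bigr => l _; rewrite rmorphD /= !mulrDl.
Qed.

Lemma B_addr x y w : B w (fun k => x k + y k) = B w x + B w y.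
Proof.
rewrite /B -big_split; apply: eq_bigr => k _; rewrite -big_split.
by apply: eq_bigr => l _; rewrite mulrDr.
Qed.

Lemma B_scalel c x w : B (fun k => c * x k) w = c^* * B x w.
Proof.
rewrite /B mulr_sumr; apply: eq_bigr => k _; rewrite mulr_sumr.
by apply: eq_bigr => l _; rewrite rmorphM /= !mulrA.
Qed.

Lemma B_scaler c x w : B w (fun k => c * x k) = c * B w x.
Proof.
rewrite /B mulr_sumr; apply: eq_bigr => k _; rewrite mulr_sumr.
by apply: eq_bigr => l _; rewrite mulrCA mulrA.
Qed.

Definition dl (i : 'I_(2^n)) : 'I_(2^n) -> C := fun j => (j == i)%:R.

Lemma B_dl i j : B (dl i) (dl j) = rho i j.
Proof.
rewrite /B (bigD1 i) //= [X in _ + X]big1 ?addr0; last first.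
  by move=> k /negbTE ki; rewrite /dl ki rmorph0 big1 // => l _; rewrite !mul0r.
rewrite (bigD1 j) //= big1 ?addr0; last by move=> l /negbTE lj; rewrite /dl lj mulr0.
by rewrite /dl !eqxx rmorph1 mul1r mulr1.
Qed.

Lemma B_dlr x j : B x (dl j) = \sum_k (x k)^* * rho k j.
Proof.
apply: eq_bigr => k _; rewrite (bigD1 j) //= big1 ?addr0; last by move=> l /negbTE lj; rewrite /dl lj mulr0.
by rewrite /dl eqxx mulr1.
Qed.

Lemma diag_ge0 k : 0 <= rho k k.
Proof. by rewrite -B_dl B_ge0. Qed.


Lemma B2 k l (al be : C) :
  B (fun j => al * dl k j + be * dl l j) (fun j => al * dl k j + be * dl l j)
  = al^* * al * rho k k + al^* * be * rho k l + be^* * al * rho l k + be^* * be * rho l l.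
Proof.
rewrite (B_addl (fun j => al * dl k j) (fun j => be * dl l j)).
rewrite !(B_addr (fun j => al * dl k j) (fun j => be * dl l j)).
rewrite !(B_scalel al) !(B_scalel be) !(B_scaler al) !(B_scaler be) !B_dl.
ring.
Qed.

Lemma pair_ineq k l (p q : C) : 0 <= p -> 0 <= q ->
  2 * p * q * `|rho k l| <= p ^+ 2 * rho l l + q ^+ 2 * rho k k.
Proof.
move=> p0 q0; set r := `|rho k l|.
have r0 : 0 <= r by rewrite normr_ge0.
have [rz|rnz] := eqVneq r 0.
  rewrite rz mulr0; apply: addr_ge0; apply: mulr_ge0; rewrite ?exprn_ge0 ?diag_ge0 //.
set u := rho k l.
have unz : u != 0 by rewrite -normr_eq0.
have hu : u^* = r ^+ 2 / u by rewrite normCK mulrAC divff // mul1r.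
set c := - (p * u^* / r).
have := B_ge0 (fun j => q * dl k j + c * dl l j).
rewrite B2 -/u (Hherm k l) -/u.
have cc : c^* = - (p * u / r).
  by rewrite /c rmorphN rmorphM fmorphV /= rmorphM /= conjCK (geC0_conj p0) (geC0_conj r0).
rewrite cc (geC0_conj q0) /c hu.
have -> : q * q * rho k k + q * - (p * (r ^+ 2 / u) / r) * u + - (p * u / r) * q * (r ^+ 2 / u) +
  - (p * u / r) * - (p * (r ^+ 2 / u) / r) * rho l l
  = p ^+ 2 * rho l l + q ^+ 2 * rho k k - 2 * p * q * r by field; rewrite unz rnz.
by rewrite subr_ge0.
Qed.


Lemma B_le x : B x x <= \sum_k `|x k| ^+ 2.
Proof.
have h0 := B_ge0 x.
rewrite -(ger0_norm h0) /B.
apply: (le_trans (ler_norm_sum _ _ _)).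
apply: (le_trans (ler_sum _ (fun k _ => ler_norm_sum _ _ _))).
have E : \sum_k \sum_l (`|x k| ^+ 2 * rho l l + `|x l| ^+ 2 * rho k k) = 2 * \sum_k `|x k| ^+ 2.
  rewrite (eq_bigr (fun k => `|x k| ^+ 2 * \sum_l rho l l + \sum_l `|x l| ^+ 2 * rho k k)); last first.
    by move=> k _; rewrite big_split /= mulr_sumr.
  rewrite big_split /= exchange_big /=.
  under [X in _ + X = _]eq_bigr do rewrite -mulr_sumr.
  rewrite -mulr_suml.
  have -> : \sum_l rho l l = 1 by rewrite -Htr.
  by rewrite mulr1 -mulr2n mulr_natl.
apply: (@le_trans _ _ ((2:C)^-1 * (\sum_k \sum_l (`|x k| ^+ 2 * rho l l + `|x l| ^+ 2 * rho k k)))); last first.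
  by rewrite E mulrA mulVf ?mul1r // pnatr_eq0.
rewrite mulr_sumr; apply: ler_sum => k _; rewrite mulr_sumr; apply: ler_sum => l _.
rewrite !normrM norm_conjC.
have := pair_ineq k l (normr_ge0 (x k)) (normr_ge0 (x l)).
rewrite ler_pdivlMl ?ltr0Sn //.
move=> h; apply: le_trans h; rewrite le_eqVlt; apply/orP; left; apply/eqP; ring.
Qed.


Lemma B_ext x x' y y' : (forall k, x k = x' k) -> (forall k, y k = y' k) -> B x y = B x' y'.
Proof.
by move=> hx hy; apply: eq_bigr => k _; apply: eq_bigr => l _; rewrite hx hy.
Qed.

Lemma tlemma x y t : t^* = t ->
  0 <= t ^+ 2 * B x x + t * (B x y + B y x) + B y y.
Proof.
move=> ht; have := B_ge0 (fun k => t * x k + y k).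
rewrite (B_addl (fun k => t * x k) y) !(B_addr (fun k => t * x k) y).
rewrite !(B_scalel t) !(B_scaler t) ht.
by have -> : t * (t * B x x) + t * B x y + (t * B y x + B y y) =
  t ^+ 2 * B x x + t * (B x y + B y x) + B y y by ring.
Qed.

Definition S : {set 'I_(2^n)} := idx0 n |: ((@e_idx n) @: [set: 'I_n]).

Lemma sumS (G : 'I_(2^n) -> C) : \sum_(k in S) G k = G (idx0 n) + \sum_i G (e_idx i).
Proof.
rewrite big_setU1 /=; last first.
  by apply/imsetP => -[i _ /eqP]; rewrite eq_sym (negbTE (e_idx_neq0 i)).
rewrite big_imset; last by move=> i j _ _; apply: e_idx_inj.
by congr (_ + _); apply: eq_bigl => i; rewrite in_setT.
Qed.

Lemma sumS_if (G : 'I_(2^n) -> C) :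
  \sum_k (if k \in S then G k else 0) = G (idx0 n) + \sum_i G (e_idx i).
Proof. by rewrite -big_mkcond sumS. Qed.

Lemma sumS' (G : 'I_(2^n) -> C) :
  \sum_k (if (k \in S) && (k != idx0 n) then G k else 0) = \sum_i G (e_idx i).
Proof.
rewrite -big_mkcond; apply: (@addrI _ (G (idx0 n))); rewrite -sumS.
by rewrite [RHS](bigD1 (idx0 n)) //= !inE eqxx.
Qed.


Lemma main_sec (a : 'I_n -> C) :
  let z := fun i : 'I_n => rho (e_idx i) (idx0 n) in
  norm2 (fun i => a i - z i) <= norm2 a / 2 ->
  expval rho (pi_state (fun i => a i / 10))
    >= rho (idx0 n) (idx0 n) + norm2 a ^+ 2 / 20.
Proof.
move=> z hz.
set b := (fun i : 'I_n => a i / 10).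
pose f k := \prod_(i < n) (if qbit k i then b i else 1).
pose P := \prod_(i < n) (1 + `|b i| ^+ 2).
pose X := \sum_(i < n) `|b i| ^+ 2.
pose s2 := \sum_(i < n) `|a i| ^+ 2.
pose p := rho (idx0 n) (idx0 n).
pose e0 := dl (idx0 n).
pose u k := if k \in S then f k else 0.
pose w k := if k \in S then 0 else f k.
pose v k := if (k \in S) && (k != idx0 n) then f k else 0.
pose v' k := if (k \in S) && (k != idx0 n) then rho k (idx0 n) else 0.
have f0 : f (idx0 n) = 1 by rewrite /f big1 // => i _; rewrite qbit_idx0.
have fe j : f (e_idx j) = b j.
  rewrite /f (bigD1 j) //= qbit_e eqxx big1 ?mulr1 // => i /negbTE ij.
  by rewrite qbit_e ij.
have P0 : 0 < P.
  by rewrite prodr_gt0 // => i _; rewrite (lt_le_trans ltr01) // lerDl exprn_ge0.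
have E1 : expval rho (pi_state b) = B f f / P.
  pose Nv := (\prod_(i < n) sqrtC (1 + `|b i| ^+ 2))^-1.
  have pik k : pi_state b k 0 = Nv * f k by rewrite mxE prodf_div mulrC.
  have -> : expval rho (pi_state b) = B (fun k => Nv * f k) (fun k => Nv * f k).
    by apply: eq_bigr => k _; apply: eq_bigr => l _; rewrite !pik.
  rewrite B_scalel B_scaler.
  have Nv0 : 0 <= Nv by rewrite invr_ge0 prodr_ge0 // => i _; rewrite sqrtC_ge0 addr_ge0 ?exprn_ge0.
  rewrite (geC0_conj Nv0) mulrA -expr2 mulrC /Nv exprVn -prodrXl.
  by congr (_ * _^-1); apply: eq_bigr => i _; rewrite sqrtCK.
have Ef : B f f = B u u + (B u w + B w u) + B w w.
  rewrite (@B_ext f (fun k => u k + w k) f (fun k => u k + w k)); last 2 first.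
  - by move=> k; rewrite /u /w; case: (k \in S); rewrite ?addr0 ?add0r.
  - by move=> k; rewrite /u /w; case: (k \in S); rewrite ?addr0 ?add0r.
  by rewrite B_addl !B_addr; ring.
have Eu : B u u = p + (B e0 v + B v e0) + B v v.
  have ue k : u k = e0 k + v k.
    rewrite /u /v /e0 /dl; have [->|kn] := eqVneq k (idx0 n).
      by rewrite /S !inE eqxx /= f0 addr0.
    by rewrite andbT add0r.
  rewrite (@B_ext u (fun k => e0 k + v k) u (fun k => e0 k + v k)) // B_addl !B_addr.
  by rewrite /e0 B_dl /p; ring.
have Ev : B v e0 = \sum_i (b i)^* * z i.
  rewrite /e0 B_dlr.
  transitivity (\sum_k (if (k \in S) && (k != idx0 n) then (f k)^* * rho k (idx0 n) else 0)).
    by apply: eq_bigr => k _; rewrite /v; case: ifP => // _; rewrite rmorph0 mul0r.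
  by rewrite sumS'; apply: eq_bigr => i _; rewrite fe.
have Ev2 : B e0 v = (\sum_i (b i)^* * z i)^* by rewrite B_herm Ev.
have Qv : 0 <= B v v := B_ge0 v.
have nf k : `|f k| ^+ 2 = \prod_i (if qbit k i then `|b i| ^+ 2 else 1).
  rewrite /f normr_prod -prodrXl; apply: eq_bigr => i _.
  by case: qbit; rewrite ?normr1 ?expr1n.
have Sf : \sum_k `|f k| ^+ 2 = P.
  under eq_bigr do rewrite nf.
  have := sum_prod_bits (fun i (bb : bool) => if bb then `|b i| ^+ 2 else 1).
  rewrite /= => ->; apply: eq_bigr => i _; exact: addrC.
have Su : \sum_k `|u k| ^+ 2 = 1 + X.
  transitivity (\sum_k (if k \in S then `|f k| ^+ 2 else 0)).
    by apply: eq_bigr => k _; rewrite /u; case: ifP; rewrite ?normr0 ?expr0n.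
  by rewrite sumS_if f0 normr1 expr1n; congr (_ + _); apply: eq_bigr => i _; rewrite fe.
have Sw : \sum_k `|w k| ^+ 2 = P - 1 - X.
  rewrite -Sf -addrA -opprD -Su -sumrB; apply: eq_bigr => k _.
  by rewrite /u /w; case: ifP; rewrite ?normr0 ?expr0n ?subr0 ?subrr.
have m1 : B w w <= P - 1 - X by rewrite -Sw B_le.
pose Zs := \sum_i `|z i| ^+ 2.
have Zs0 : 0 <= Zs by apply: sumr_ge0 => i _; rewrite exprn_ge0.
have Ev' : B v' e0 = Zs.
  rewrite /e0 B_dlr.
  transitivity (\sum_k (if (k \in S) && (k != idx0 n) then `|rho k (idx0 n)| ^+ 2 else 0)).
    by apply: eq_bigr => k _; rewrite /v'; case: ifP => _; rewrite ?rmorph0 ?mul0r // normCKC.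
  by rewrite sumS'.
have Qv' : B v' v' <= Zs.
  rewrite (le_trans (B_le v')) // le_eqVlt; apply/orP; left; apply/eqP.
  transitivity (\sum_k (if (k \in S) && (k != idx0 n) then `|rho k (idx0 n)| ^+ 2 else 0)).
    by apply: eq_bigr => k _; rewrite /v'; case: ifP => _; rewrite ?normr0 ?expr0n.
  by rewrite sumS'.
have Zp : Zs <= p.
  have h1 : (-1 : C)^* = -1 by rewrite rmorphN1.
  have := tlemma v' e0 h1.
  rewrite Ev' (B_herm v' e0) Ev' (geC0_conj Zs0) /e0 B_dl -/p sqrrN expr1n mul1r mulN1r => h.
  have h2 : B v' v' - (Zs + Zs) + p <= Zs - (Zs + Zs) + p by rewrite !lerD2r.
  have := le_trans h h2.
  have e : Zs - (Zs + Zs) + p = p - Zs by ring.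
  by rewrite e subr_ge0.
have p0 : 0 <= p := diag_ge0 _.
have p1 : p <= 1.
  have := B_le e0; rewrite /e0 B_dl -/p => h; rewrite (le_trans h) //.
  rewrite (bigD1 (idx0 n)) //= big1 ?addr0; first by rewrite /dl eqxx normr1 expr1n.
  by move=> k /negbTE kn; rewrite /dl kn normr0 expr0n.
have hn : norm2 a ^+ 2 = s2 by rewrite /norm2 sqrtCK.
pose D := \sum_i `|a i - z i| ^+ 2.
have hD : D <= s2 / 4.
  have s0 : 0 <= norm2 (fun i => a i - z i).
    by rewrite /norm2 sqrtC_ge0 sumr_ge0 // => i _; rewrite exprn_ge0.
  have := ler_pM s0 s0 hz hz.
  rewrite -!expr2 /norm2 /= expr_div_n !sqrtCK -/D -/s2.
  by have -> : (2 : C) ^+ 2 = 4 by rewrite expr2 -natrM.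
pose g := \sum_i (a i)^* * z i.
have pw i : `|z i - a i / 2| ^+ 2 = `|a i - z i| ^+ 2 + - `|a i| ^+ 2
   + ((a i)^* * z i + ((a i)^* * z i)^*) * 2^-1 + `|a i| ^+ 2 * 4^-1.
  rewrite !normCK !(rmorphB, rmorphM, rmorphD, fmorphV, rmorph1) /= !conjCK.
  by field; rewrite ?pnatr_eq0.
have gsum : 0 <= D + - s2 + (g + g^*) * 2^-1 + s2 * 4^-1.
  have : 0 <= \sum_i `|z i - a i / 2| ^+ 2 by apply: sumr_ge0 => i _; rewrite exprn_ge0.
  under eq_bigr do rewrite pw.
  rewrite !big_split /= sumrN -!mulr_suml big_split /= -rmorph_sum.
  done.
have hg : s2 <= g + g^*.
  have h3 : 0 <= s2 * 4^-1 + - s2 + (g + g^*) * 2^-1 + s2 * 4^-1.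
    by apply: (le_trans gsum); rewrite !lerD2r.
  have e : s2 * 4^-1 + - s2 + (g + g^*) * 2^-1 + s2 * 4^-1 = (g + g^* - s2) / 2.
    by field; rewrite ?pnatr_eq0.
  by move: h3; rewrite e pmulr_lge0 ?invr_gt0 ?ltr0n // subr_ge0.
have pa i : `|a i| ^+ 2 <= 2 * `|a i - z i| ^+ 2 + 2 * `|z i| ^+ 2.
  rewrite -subr_ge0.
  have -> : 2 * `|a i - z i| ^+ 2 + 2 * `|z i| ^+ 2 - `|a i| ^+ 2 = `|a i - 2 * z i| ^+ 2.
    by rewrite !normCK !(rmorphB, rmorphM, rmorphD, rmorph1) /=; ring.
  exact: exprn_ge0.
have hs : s2 <= 2 * D + 2 * Zs.
  by rewrite /s2 /D /Zs !mulr_sumr -big_split; apply: ler_sum => i _; exact: pa.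
have s4 : s2 <= 4.
  have h4 : 2 * D + 2 * Zs <= 2 * (s2 / 4) + 2 * 1.
    by rewrite lerD // ler_wpM2l // (le_trans Zp).
  have h5 := le_trans hs h4.
  rewrite -subr_ge0.
  have e : 4 - s2 = 2 * (2 * (s2 / 4) + 2 * 1 - s2) by field; rewrite ?pnatr_eq0.
  by rewrite e mulr_ge0 // subr_ge0.
have hX : X = s2 / 100.
  rewrite /X /s2 mulr_suml; apply: eq_bigr => i _.
  rewrite /b normf_div normr_nat expr_div_n; congr (_ / _).
  by rewrite expr2 -natrM.
have hb : \sum_i (b i)^* * z i = g / 10.
  rewrite /g mulr_suml; apply: eq_bigr => i _.
  by rewrite /b rmorphM fmorphV rmorph_nat /=; ring.
have hq : p + 10 * X <= B u u.
  rewrite Eu Ev Ev2 hb -addrA lerD2l.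
  apply: (@le_trans _ _ ((g / 10)^* + g / 10)); last by rewrite lerDl.
  have -> : (g / 10)^* + g / 10 = (g + g^*) / 10.
    by rewrite rmorphM fmorphV rmorph_nat /=; ring.
  have -> : 10 * X = s2 / 10 by rewrite hX; field; rewrite ?pnatr_eq0.
  by rewrite ler_wpM2r // invr_ge0 ler0n.
have Rr : B u w + B w u \is Num.real.
  by rewrite CrealE (B_herm u w) rmorphD /= conjCK addrC.
have ht : forall t : C, t \is Num.real -> 0 <= t ^+ 2 * B u u + t * (B u w + B w u) + B w w.
  by move=> t tr; apply: tlemma; apply: conj_Creal.
have hP : P * (1 - X) <= 1.
  exact: (@prod_bound C 'I_n (index_enum 'I_n) (fun i => `|b i| ^+ 2) (fun i => exprn_ge0 2 (normr_ge0 (b i)))).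
have X0 : 0 <= X by apply: sumr_ge0 => i _; rewrite exprn_ge0.
have X1 : X <= 1 / 25.
  rewrite hX (le_trans (ler_wpM2r _ s4)) ?invr_ge0 ?ler0n //.
  by rewrite le_eqVlt; apply/orP; left; apply/eqP; field.
have fin := final_arith p0 p1 hq (B_ge0 w) m1 hP X0 X1 Rr ht.
rewrite E1 Ef hn ler_pdivlMr // mulrC.
have -> : s2 / 20 = 5 * X by rewrite hX; field; rewrite ?pnatr_eq0.
exact: fin.
Qed.

End Form.

Theorem theorem4p9 (C : numClosedFieldType) (n : nat) (rho : 'M[C]_(2^n))
    (a : 'I_n -> C) :
  density_matrix rho ->
  let z := fun i : 'I_n => rho (e_idx i) (idx0 n) in
  norm2 (fun i => a i - z i) <= norm2 a / 2 ->
  expval rho (pi_state (fun i => a i / 10))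
    >= rho (idx0 n) (idx0 n) + norm2 a ^+ 2 / 20.
Proof.
by move=> [H1 H2 H3]; apply: main_sec.
Qed.
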